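(* Let $n\ge2$, let $A=(a_{ij})$ be an $n\times n$ nonnegative irreducible matrix and $c=(c_1,\dots,c_n)^T$ a vector with all components positive. For $1\le i\le n$ put \[M_i=\frac{1}{c_i}\sum_{j=1}^n a_{ij}c_j,\qquad S=\min_{1\le i\le n}a_{ii},\qquad T=\min_{i\ne j}\frac{a_{ij}c_j}{c_i},\] and assume $M_1\ge M_2\ge\cdots\ge M_n$. Then \[\rho(A)\ge \frac{M_n+S-T+\sqrt{(M_n-S+T)^2+4T\sum_{k=1}^{n-1}(M_k-M_n)}}{2}.\] Equality holds if and only if $M_1=\cdots=M_n$, or $T>0$ and for some $2\le t\le n$: (i) $a_{kk}=S$ for $1\le k\le t-1$; (ii) $\frac{a_{kl}c_l}{c_k}=T$ for all $1\le k\le n$, $1\le l\le t-1$, $k\ne l$; (iii) $M_t=\cdots=M_n$.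
   Context: $\rho(A)$ denotes the spectral radius of $A$. *)

(* Defs.v *)
(* Matrices over an arbitrary numClosedFieldType C (e.g. the
   complex numbers); a nonnegative matrix has entries 0 <= a_ij (hence real). *)
From HB Require Import structures.
From mathcomp Require Import all_boot all_order all_algebra.
Set Implicit Arguments. Unset Strict Implicit. Unset Printing Implicit Defensive.
Import Order.TTheory GRing.Theory Num.Theory.
Local Open Scope ring_scope.

(* The eigenvalues of A (with multiplicity): the roots of the characteristic
   polynomial, which splits since C is algebraically closed. *)
Definition eigenvalues_seq (C : numClosedFieldType) (n : nat) (A : 'M[C]_n)
  : seq C := sval (closed_field_poly_normal (char_poly A)).

Definition spectral_radius (C : numClosedFieldType) (n : nat) (A : 'M[C]_n)
  : C := \big[Num.max/0]_(z <- eigenvalues_seq A) `|z|.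

Definition nonneg_mx (C : numClosedFieldType) (n : nat) (A : 'M[C]_n) : Prop :=
  forall i j, 0 <= A i j.

(* Irreducible: there is no nonempty proper index set I with a_ij = 0 for all
   i in I, j not in I (i.e. A is not permutation-similar to a block
   triangular matrix). *)
Definition irreducible_mx (C : numClosedFieldType) (n : nat) (A : 'M[C]_n)
  : Prop :=
  forall I : {set 'I_n}, I != set0 -> I != setT ->
    exists i j, [/\ i \in I, j \notin I & A i j != 0].

Definition Mrow (C : numClosedFieldType) (n : nat) (A : 'M[C]_n)
  (c : 'I_n -> C) (i : 'I_n) : C := (\sum_j A i j * c j) / c i.

(* Main.v *)
Require Import Defs.
From HB Require Import structures.
From mathcomp Require Import all_boot all_order all_algebra.
From mathcomp Require Import ring.
From Stdlib Require Import Classical.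
Import Order.TTheory GRing.Theory Num.Theory Num.Def.
Set Implicit Arguments. Unset Strict Implicit. Unset Printing Implicit Defensive.
Local Open Scope ring_scope.


Lemma seq_max (C : numDomainType) (s : seq C) :
  all (fun x => x \is Num.real) s -> s != [::] ->
  exists2 x, x \in s & forall y, y \in s -> y <= x.
Proof.
elim: s => [|a s IH] //= /andP[ra rs] _.
case: s IH rs => [|b s'] IH rs.
  by exists a; [rewrite inE | move=> y; rewrite inE => /eqP->].
have [x xin xmax] := IH rs isT.
have rx : x \is Num.real by exact: (allP rs x xin).
have [ax|xa] := real_leP ra rx.
  exists x; first by rewrite inE xin orbT.
  by move=> y; rewrite inE => /orP[/eqP->|/xmax].
exists a; first by rewrite inE eqxx.
move=> y; rewrite inE => /orP[/eqP->//|/xmax yx].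
exact: le_trans yx (ltW xa).
Qed.

Lemma fin_max (C : numDomainType) (n : nat) (f : 'I_n.+1 -> C) :
  (forall i, f i \is Num.real) -> exists i, forall j, f j <= f i.
Proof.
move=> rf.
have := @seq_max C [seq f i | i <- enum 'I_n.+1].
case.
- by apply/allP => x /mapP[i _ ->].
- by rewrite -size_eq0 size_map size_enum_ord.
move=> x /mapP[i _ ->] H; exists i => j; apply: H.
by apply: map_f; rewrite mem_enum.
Qed.

Lemma fin_min (C : numDomainType) (n : nat) (f : 'I_n.+1 -> C) :
  (forall i, f i \is Num.real) -> exists i, forall j, f i <= f j.
Proof.
move=> rf; have [i Hi] := @fin_max C n (fun i => - f i) (fun i => ltac:(by rewrite realN)).
by exists i => j; rewrite -lerN2; apply: Hi.
Qed.


Definition creal (C : numClosedFieldType) (q : {poly C}) := map_poly conjC q = q.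

Lemma creal_horner (C : numClosedFieldType) (q : {poly C}) x :
  creal q -> x \is Num.real -> q.[x] \is Num.real.
Proof.
move=> Hq rx; apply/CrealP.
by rewrite -horner_map /= Hq conj_Creal.
Qed.

Lemma creal_cancel (C : numClosedFieldType) (q h : {poly C}) :
  creal (q * h) -> creal h -> h != 0 -> creal q.
Proof.
rewrite /creal rmorphM /= => E Hh hne; apply: (mulIf hne) => /=.
by rewrite -{1}Hh.
Qed.

Lemma sqr_real_gt0 (C : numDomainType) (c : C) :
  c \is Num.real -> c != 0 -> 0 < c * c.
Proof.
by move=> rc nc; rewrite -expr2 -real_normK // exprn_gt0 // normr_gt0.
Qed.

Lemma sign_interval_k (C : numClosedFieldType) (k : nat) :
  forall (q : {poly C}), (size q <= k)%N -> creal q -> q != 0 ->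
  forall a b, a \is Num.real -> b \is Num.real -> a <= b ->
  (forall x, a <= x -> x <= b -> ~~ root q x) -> 0 < q.[a] * q.[b].
Proof.
elim: k => [|k IH] q.
  by rewrite leqn0 size_poly_eq0 => /eqP-> _ /eqP.
move=> sq cq qn0 a b ra rb ab Hr.
have [/eqP sq1|sqn1] := eqVneq (size q) 1.
  have [c cn0 qc] := size_poly1P _ sq1.
  rewrite qc !hornerC; apply: sqr_real_gt0 cn0.
  apply/CrealP; move: cq; rewrite /creal qc map_polyC /=.
  exact: polyC_inj.
have [w rootw] := closed_rootP q sqn1.
have [q' Eq] := factor_theorem q w rootw.
have q'n0 : q' != 0 by apply: contraNneq qn0 => q'0; rewrite Eq q'0 mul0r.
have xw0 : ('X - w%:P : {poly C}) != 0 by rewrite polyXsubC_eq0.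
have szq : size q = (size q').+1.
  by rewrite Eq size_mul // size_XsubC addn2.
have [rw|nrw] := boolP (w \is Num.real).
  have cq' : creal q'.
    apply: (creal_cancel (h := 'X - w%:P)); first by rewrite -Eq.
      by rewrite /creal map_polyXsubC /= conj_Creal.
    exact: xw0.
  have H' := IH q' _ cq' q'n0 a b ra rb ab.
  rewrite Eq !hornerM !hornerXsubC.
  rewrite mulrACA; apply: mulr_gt0.
    apply: H'; first by rewrite -ltnS -szq.
    move=> x ax xb; apply: contra (Hr x ax xb) => rx.
    by rewrite Eq rootM rx.
  have [wa|aw] := real_ltP rw ra.
    by apply: mulr_gt0; rewrite subr_gt0 // (lt_le_trans wa ab).
  have [bw|wb] := real_ltP rb rw.
    rewrite -mulrNN; apply: mulr_gt0; rewrite oppr_gt0 subr_lt0 //.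
    exact: le_lt_trans ab bw.
  by move: (Hr w aw wb); rewrite rootw.
have wcw : w^* != w by rewrite -CrealE.
have rootq'c : root q' w^*.
  have : root q w^*.
    by rewrite /root -{1}cq horner_map /= (rootP rootw) conjC0.
  rewrite Eq rootM root_XsubC (negbTE wcw) orbF //.
have [q'' Eq'] := factor_theorem q' w^* rootq'c.
set h : {poly C} := ('X - (w^*)%:P) * ('X - w%:P).
have Eqh : q = q'' * h by rewrite Eq Eq' mulrA.
have hn0 : h != 0 by rewrite mulf_neq0 // polyXsubC_eq0.
have q''n0 : q'' != 0 by apply: contraNneq qn0 => q'0; rewrite Eqh q'0 mul0r.
have ch : creal h.
  by rewrite /creal rmorphM /= !map_polyXsubC /= conjCK mulrC.
have cq'' : creal q'' by apply: (creal_cancel (h := h)) => //; rewrite -Eqh.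
have szq' : size q' = (size q'').+1.
  by rewrite Eq' size_mul ?polyXsubC_eq0 // size_XsubC addn2.
have hpos x : x \is Num.real -> 0 < h.[x].
  move=> rx; rewrite /h hornerM !hornerXsubC.
  rewrite (_ : _ * _ = `|x - w| ^+ 2); last by rewrite normCKC rmorphB /= (conj_Creal rx).
  rewrite exprn_gt0 // normr_gt0 subr_eq0.
  by apply: contraNneq nrw => <-.
rewrite Eqh !(hornerM q'' h) mulrACA; apply: mulr_gt0; last by apply: mulr_gt0; apply: hpos.
apply: IH => //.
  by move: sq; rewrite szq szq' ltnS => /ltnW.
move=> x ax xb; apply: contra (Hr x ax xb) => rx.
by rewrite Eqh rootM rx.
Qed.

Lemma sign_interval (C : numClosedFieldType) (q : {poly C}) a b :
  creal q -> q != 0 -> a \is Num.real -> b \is Num.real -> a <= b ->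
  (forall x, a <= x -> x <= b -> ~~ root q x) -> 0 < q.[a] * q.[b].
Proof. by move=> cq qn ra rb ab Hr; apply: (sign_interval_k (leqnn _) cq qn ra rb ab Hr). Qed.


Definition Np (C : numClosedFieldType) (n : nat) (A : 'M[C]_n) (y : 'I_n -> C)
  (i : 'I_n) : {poly C} := \sum_j (\adj (char_poly_mx A)) i j * (y j)%:P.

Lemma eval_cpm (C : numClosedFieldType) (n : nat) (A : 'M[C]_n) s :
  map_mx (horner_eval s) (char_poly_mx A) = s%:M - A.
Proof.
apply/matrixP => i j; rewrite !mxE /= horner_evalE.
by rewrite hornerD hornerN hornerMn hornerX hornerC.
Qed.

Lemma eval_char_poly (C : numClosedFieldType) (n : nat) (A : 'M[C]_n) s :
  (char_poly A).[s] = \det (s%:M - A).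
Proof. by rewrite /char_poly -eval_cpm det_map_mx. Qed.

Lemma eval_Np (C : numClosedFieldType) (n : nat) (A : 'M[C]_n) y s i :
  (Np A y i).[s] = \sum_j \adj (s%:M - A) i j * y j.
Proof.
rewrite /Np horner_sum; apply: eq_bigr => j _.
by rewrite hornerM hornerC -eval_cpm -map_mx_adj !mxE.
Qed.

Lemma Np_eq (C : numClosedFieldType) (n : nat) (A : 'M[C]_n) y s i :
  s * (Np A y i).[s] - \sum_k A i k * (Np A y k).[s] = (char_poly A).[s] * y i.
Proof.
set B := s%:M - A.
have E1 : \sum_k B i k * (Np A y k).[s] = \det B * y i.
  under eq_bigr => k _ do rewrite eval_Np mulr_sumr.
  rewrite exchange_big /=.
  under eq_bigr => j _ do (under eq_bigr => k _ do rewrite mulrA; rewrite -mulr_suml).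
  have E2 j : \sum_k B i k * \adj B k j = (B *m \adj B) i j by rewrite mxE.
  under eq_bigr => j _ do rewrite E2 mul_mx_adj mxE.
  rewrite (bigD1 i) //= big1 ?addr0; first by rewrite eqxx mulr1n.
  by move=> j /negbTE; rewrite eq_sym => ->; rewrite mulr0n mul0r.
have E3 : \sum_k B i k * (Np A y k).[s] =
    \sum_k (s *+ (i == k) * (Np A y k).[s] - A i k * (Np A y k).[s]).
  by apply: eq_bigr => k _; rewrite /B !mxE mulrBl.
rewrite eval_char_poly -/B -E1 E3.
rewrite sumrB; congr (_ - _); rewrite (bigD1 i) //= big1 ?addr0; first by rewrite eqxx mulr1n.
by move=> k /negbTE; rewrite eq_sym => ->; rewrite mulr0n mul0r.
Qed.

Lemma conj_real_mx (C : numClosedFieldType) (n : nat) (A : 'M[C]_n) :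
  (forall i j, A i j \is Num.real) -> map_mx conjC A = A.
Proof. by move=> rA; apply/matrixP => i j; rewrite mxE conj_Creal. Qed.

Lemma creal_char_poly (C : numClosedFieldType) (n : nat) (A : 'M[C]_n) :
  (forall i j, A i j \is Num.real) -> creal (char_poly A).
Proof. by move=> rA; rewrite /creal map_char_poly conj_real_mx. Qed.

Lemma creal_Np (C : numClosedFieldType) (n : nat) (A : 'M[C]_n) y i :
  (forall i j, A i j \is Num.real) -> (forall j, y j \is Num.real) ->
  creal (Np A y i).
Proof.
move=> rA ry; rewrite /creal /Np rmorph_sum /=; apply: eq_bigr => j _.
rewrite rmorphM /= map_polyC /= conj_Creal //; congr (_ * _).
have E := map_mx_adj (map_poly conjC) (char_poly_mx A).
rewrite map_char_poly_mx conj_real_mx // in E.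
by rewrite -[in RHS]E [in RHS]mxE.
Qed.


Definition mv (C : numFieldType) n (A : 'M[C]_n) (v : 'I_n -> C) i :=
  \sum_j A i j * v j.

Lemma mv_lin (C : numFieldType) n (A : 'M[C]_n) u v a i :
  mv A (fun j => u j - a * v j) i = mv A u i - a * mv A v i.
Proof.
rewrite /mv mulr_sumr -sumrB; apply: eq_bigr => j _.
by rewrite mulrBr mulrCA.
Qed.

Lemma mv_ge0 (C : numFieldType) n (A : 'M[C]_n) u i :
  (forall i j, 0 <= A i j) -> (forall j, 0 <= u j) -> 0 <= mv A u i.
Proof. by move=> hA hu; apply: sumr_ge0 => j _; rewrite mulr_ge0. Qed.

Lemma contra_zero (C : numFieldType) n (A : 'M[C]_n) u s i :
  (forall i j, 0 <= A i j) -> (forall j, 0 <= u j) -> u i = 0 ->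
  0 < s * u i - mv A u i -> False.
Proof.
move=> hA hu ui0; rewrite ui0 mulr0 sub0r oppr_gt0.
by move=> H; have := le_lt_trans (mv_ge0 i hA hu) H; rewrite ltxx.
Qed.

Lemma Zmat (C : numFieldType) n (A : 'M[C]_n.+1) u y s :
  (forall i j, 0 <= A i j) -> (forall j, 0 < y j) -> (forall j, u j \is Num.real) ->
  (forall j, 0 < s * y j - mv A y j) -> (forall j, 0 < s * u j - mv A u j) ->
  forall j, 0 < u j.
Proof.
move=> hA hy ru hsy hsu.
have ry j : y j \is Num.real by apply: gtr0_real.
have [i Hi] := @fin_min C n (fun j => u j / y j)
  (fun j => ltac:(by rewrite rpredM // rpredV)).
set th := u i / y i.
have rth : th \is Num.real by rewrite rpredM // rpredV.
have Hge j : th * y j <= u j.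
  by rewrite -ler_pdivlMr // Hi.
have [th0|th0] := real_ltP (rpred0 _) rth.
  by move=> j; apply: lt_le_trans (Hge j); rewrite mulr_gt0.
exfalso.
apply: (@contra_zero C _ A (fun j => u j - th * y j) s i hA).
+ by move=> j; rewrite subr_ge0 Hge.
+ by rewrite /th divfK ?subrr // gt_eqF.
rewrite mv_lin.
have -> : s * (u i - th * y i) - (mv A u i - th * mv A y i) =
   (s * u i - mv A u i) + (- th) * (s * y i - mv A y i) by ring.
apply: (lt_le_trans (hsu i)); rewrite lerDl; apply: mulr_ge0.
  by rewrite oppr_ge0.
exact: ltW.
Qed.

Lemma contra_ratio (C : numFieldType) n (A : 'M[C]_n.+1) u y b :
  (forall i j, 0 <= A i j) -> (forall j, 0 < y j) -> (forall j, 0 < u j) ->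
  (forall j, b * y j <= mv A y j) -> (forall j, 0 < b * u j - mv A u j) -> False.
Proof.
move=> hA hy hu hby hbu.
have [i Hi] := @fin_min C n (fun j => u j / y j)
  (fun j => ltac:(by apply: gtr0_real; rewrite divr_gt0)).
set th := u i / y i.
have th0 : 0 < th by rewrite divr_gt0.
have Hge j : th * y j <= u j by rewrite -ler_pdivlMr // Hi.
have ui : u i = th * y i by rewrite /th divfK // gt_eqF.
have H1 : th * mv A y i <= mv A u i.
  rewrite -subr_ge0 -mv_lin; apply: mv_ge0 => // j.
  by rewrite subr_ge0.
have H2 : b * u i <= th * mv A y i.
  by rewrite ui mulrCA ler_wpM2l // ltW.
have := hbu i; rewrite subr_gt0 => H3.
have := lt_le_trans H3 (le_trans H2 H1); by rewrite ltxx.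
Qed.


Lemma sgn_ge (C : numFieldType) (a nn q : C) :
  nn \is Num.real -> 0 <= a * nn -> 0 < nn * q -> 0 <= a * q.
Proof.
move=> rn h1 h2.
have nn0 : nn != 0 by apply: contraTneq h2 => ->; rewrite mul0r ltxx.
have H := sqr_real_gt0 rn nn0.
rewrite -(pmulr_lge0 _ H).
have -> : a * q * (nn * nn) = (a * nn) * (nn * q) by ring.
by rewrite mulr_ge0 // ltW.
Qed.

Lemma sgn_gt (C : numFieldType) (a nn q : C) :
  nn \is Num.real -> 0 < a * nn -> 0 < nn * q -> 0 < a * q.
Proof.
move=> rn h1 h2.
have nn0 : nn != 0 by apply: contraTneq h2 => ->; rewrite mul0r ltxx.
have H := sqr_real_gt0 rn nn0.
rewrite -(pmulr_lgt0 _ H).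
have -> : a * q * (nn * nn) = (a * nn) * (nn * q) by ring.
by rewrite mulr_gt0.
Qed.

Lemma mv_scale (C : numFieldType) n (A : 'M[C]_n) v a i :
  mv A (fun j => v j * a) i = mv A v i * a.
Proof. by rewrite /mv mulr_suml; apply: eq_bigr => j _; rewrite mulrA. Qed.

Lemma mv_real (C : numFieldType) n (A : 'M[C]_n) v i :
  (forall i j, A i j \is Num.real) -> (forall j, v j \is Num.real) ->
  mv A v i \is Num.real.
Proof. by move=> rA rv; apply: rpred_sum => j _; rewrite rpredM. Qed.

Lemma L_root (C : numClosedFieldType) n (A : 'M[C]_n.+1) (y : 'I_n.+1 -> C) b :
  (forall i j, 0 <= A i j) -> (forall i, 0 < y i) -> b \is Num.real ->
  (forall i, b * y i <= mv A y i) ->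
  exists l, [/\ l \is Num.real, b <= l & root (char_poly A) l].
Proof.
move=> hA hy rb hby.
apply: NNPP => Hn.
have Hnr x : b <= x -> ~~ root (char_poly A) x.
  move=> bx; apply/negP => rx; apply: Hn; exists x; split => //.
  by rewrite (ger_real bx).
have rA i j : A i j \is Num.real by apply: ger0_real.
have ry i : y i \is Num.real by apply: gtr0_real.
set p := char_poly A.
have cp : creal p := creal_char_poly rA.
have pn0 : p != 0 by apply: monic_neq0; apply: char_poly_monic.
set N := fun k => Np A y k.
have cN k : creal (N k) := creal_Np k rA ry.
have NE s k : s * (N k).[s] - mv A (fun j => (N j).[s]) k = p.[s] * y k.
  exact: Np_eq.
have rNs s k : s \is Num.real -> (N k).[s] \is Num.real.
  by move=> rs; apply: creal_horner.
have rps s : s \is Num.real -> p.[s] \is Num.real.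
  by move=> rs; apply: creal_horner.
have uE s q k : s * ((N k).[s] * q) - mv A (fun j => (N j).[s] * q) k
    = (p.[s] * q) * y k.
  by rewrite mv_scale mulrA -mulrBl NE mulrAC.
set s0 := `|b| + 1 + \sum_i mv A y i / y i.
have rmy i : mv A y i \is Num.real by apply: mv_real.
have ge0t i : 0 <= mv A y i / y i.
  by apply: divr_ge0; [apply: mv_ge0 => // j; apply: ltW | apply: ltW].
have rs0 : s0 \is Num.real.
  apply: rpredD; first by apply: rpredD; [exact: normr_real | exact: rpred1].
  by apply: rpred_sum => i _; apply: rpredM => //; rewrite rpredV.
have bs0 : b <= s0.
  apply: (le_trans (real_ler_norm rb)); rewrite /s0 -addrA lerDl.
  by rewrite addr_ge0 // sumr_ge0.
have hs0y j : 0 < s0 * y j - mv A y j.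
  have t : mv A y j / y j + 1 <= s0.
    have tj : mv A y j / y j <= \sum_i mv A y i / y i.
      by rewrite (bigD1 j) //= lerDl sumr_ge0.
    apply: (le_trans (y := \sum_i mv A y i / y i + 1)); first by rewrite lerD2r.
    by rewrite /s0 -addrA [1 + _]addrC lerDr normr_ge0.
  rewrite subr_gt0; apply: (lt_le_trans _ (ler_wpM2r (ltW (hy j)) t)).
  by rewrite mulrDl divfK ?gt_eqF // mul1r ltrDl.
have ps0 : p.[s0] != 0 by apply: Hnr.
have rps0 := rps s0 rs0.
have hu0 : forall j, 0 < (N j).[s0] * p.[s0].
  apply: (Zmat hA hy _ hs0y).
    by move=> j; rewrite rpredM // rNs.
  by move=> k; rewrite uE mulr_gt0 // sqr_real_gt0.
have Ns0 k : (N k).[s0] != 0.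
  by apply: contraTneq (hu0 k) => ->; rewrite mul0r ltxx.
set Q := \prod_k N k.
have cQ : creal Q.
  by rewrite /creal rmorph_prod; apply: eq_bigr => k _; apply: cN.
have QN l x : root (N l) x -> root Q x.
  by move=> /rootP H; rewrite /root /Q horner_prod (bigD1 l) //= H mul0r.
have QN' x : root Q x -> exists k, (N k).[x] = 0.
  rewrite /root /Q horner_prod => /prodf_eq0 [k _ /eqP H]; by exists k.
have Qs0 : Q.[s0] != 0.
  by rewrite /Q horner_prod; apply/prodf_neq0 => k _; exact: Ns0.
have NN0 l : N l != 0 by apply: contraNneq (Ns0 l) => ->; rewrite horner0.
have Qn0 : Q != 0 by apply: contraNneq Qs0 => ->; rewrite horner0.
have [r Er] := closed_field_poly_normal Q.
have lQ0 : lead_coef Q != 0 by rewrite lead_coef_eq0.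
have rootQ x : root Q x = (x \in r).
  by rewrite {1}Er rootZ // root_prod_XsubC.
set R := [seq x <- r | (x \is Num.real) && (b <= x) && (x <= s0)].
case: (eqVneq R [::]) => [R0|Rn0].
-
  have noN l x : b <= x -> x <= s0 -> ~~ root (N l) x.
    move=> bx xs0; apply/negP => /QN; rewrite rootQ => xr.
    have : x \in R by rewrite mem_filter xr bx xs0 (ger_real bx) rb.
    by rewrite R0.
  have pp : 0 < p.[b] * p.[s0].
    apply: sign_interval => // x bx _; exact: Hnr.
  apply: (@contra_ratio C n A (fun l => (N l).[b] * p.[s0]) y b hA hy _ hby).
    move=> l; apply: (@sgn_gt C _ ((N l).[s0])); first exact: rNs.
      exact: (sign_interval (cN l) (NN0 l) rb rs0 bs0 (noN l)).
    exact: hu0.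
  by move=> k; rewrite uE mulr_gt0.
-
  have allR : all (fun x => x \is Num.real) R.
    by apply/allP => x; rewrite mem_filter => /andP[/andP[/andP[]]].
  have [s1 s1R s1max] := @seq_max C R allR Rn0.
  move: (s1R); rewrite mem_filter => /andP[/andP[/andP[rs1 bs1] s1s0] s1r].
  have noQ x : s1 < x -> x <= s0 -> ~~ root Q x.
    move=> s1x xs0; apply/negP; rewrite rootQ => xr.
    have bx : b <= x by apply: (le_trans bs1); apply: ltW.
    have : x \in R by rewrite mem_filter xr bx xs0 (ger_real bx) rb.
    by move=> /s1max xs1; have := lt_le_trans s1x xs1; rewrite ltxx.
  have [k Nk] : exists k, (N k).[s1] = 0 by apply: QN'; rewrite rootQ.
  have pp : 0 < p.[s1] * p.[s0].
    apply: sign_interval => // x s1x _; apply: Hnr; exact: le_trans s1x.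
  apply: (@contra_zero C _ A (fun l => (N l).[s1] * p.[s0]) s1 k hA).
  + move=> l; apply: (@sgn_ge C _ ((N l).[s0])); first exact: rNs.
      have [->|Nl0] := eqVneq (N l).[s1] 0; first by rewrite mul0r.
      apply: ltW; apply: (sign_interval (cN l) (NN0 l) rs1 rs0 s1s0).
      move=> x s1x xs0; have [<-|xne] := eqVneq s1 x; first exact: Nl0.
      apply/negP => /QN H.
      have s1x' : s1 < x by rewrite lt_def eq_sym xne s1x.
      by move: (noQ x s1x' xs0); rewrite H.
    exact: hu0.
  + by rewrite Nk mul0r.
  by rewrite uE mulr_gt0.
Qed.


Lemma bigmax_props (C : numDomainType) (s : seq C) :
  let r := \big[Num.max/0]_(z <- s) `|z| in
  [/\ 0 <= r, (forall z, z \in s -> `|z| <= r) &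
      (forall mu, 0 <= mu -> (forall z, z \in s -> `|z| <= mu) -> r <= mu)].
Proof.
elim: s => [|a s IH] /=.
  by rewrite big_nil lexx; split => // mu mu0 _.
case: IH => r0 rmax rle.
set r := \big[_/_]_(z <- s) _ in r0 rmax rle *.
rewrite big_cons.
have cmp : `|a| >=< r by apply: real_comparable; [apply: normr_real | apply: ger0_real].
split.
- by rewrite comparable_le_max // r0 orbT.
- move=> z; rewrite inE => /orP[/eqP->|zs].
    by rewrite comparable_le_max // lexx.
  by rewrite comparable_le_max // rmax // orbT.
- move=> mu mu0 H; rewrite comparable_ge_max // H ?inE ?eqxx //=.
  by apply: rle => // z zs; apply: H; rewrite inE zs orbT.
Qed.

Lemma eig_seq_root (C : numClosedFieldType) n (A : 'M[C]_n) z :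
  root (char_poly A) z = (z \in eigenvalues_seq A).
Proof.
rewrite /eigenvalues_seq; case: (closed_field_poly_normal _) => r /= Er.
rewrite {1}Er (monicP (char_poly_monic A)) scale1r.
by rewrite root_prod_XsubC.
Qed.

Lemma rho_ge (C : numClosedFieldType) n (A : 'M[C]_n) z :
  root (char_poly A) z -> `|z| <= spectral_radius A.
Proof.
rewrite eig_seq_root => zs; rewrite /spectral_radius.
by case: (bigmax_props (eigenvalues_seq A)) => _ H _; apply: H.
Qed.

Lemma rho_ge0 (C : numClosedFieldType) n (A : 'M[C]_n) : 0 <= spectral_radius A.
Proof. by case: (bigmax_props (eigenvalues_seq A)). Qed.

Lemma rho_le (C : numClosedFieldType) n (A : 'M[C]_n) mu :
  0 <= mu -> (forall z, root (char_poly A) z -> `|z| <= mu) -> spectral_radius A <= mu.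
Proof.
move=> mu0 H; case: (bigmax_props (eigenvalues_seq A)) => _ _; apply => // z.
by rewrite -eig_seq_root; apply: H.
Qed.

Lemma char_poly_tr (C : numClosedFieldType) n (A : 'M[C]_n) :
  char_poly A^T = char_poly A.
Proof.
rewrite /char_poly -det_tr; congr (\det _); apply/matrixP => i j.
by rewrite !mxE eq_sym.
Qed.

Lemma eigen_bound (C : numClosedFieldType) n (A : 'M[C]_n.+1) (y : 'I_n.+1 -> C) mu z :
  (forall i j, 0 <= A i j) -> (forall i, 0 < y i) ->
  (forall i, mv A y i <= mu * y i) -> root (char_poly A) z -> `|z| <= mu.
Proof.
move=> hA hy hmu; rewrite -char_poly_tr -eigenvalue_root_char => /eigenvalueP [v Hv vn0].
have Ev j : \sum_i A j i * v 0 i = z * v 0 j.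
  have := congr1 (fun M : 'M[C]_(1, n.+1) => M 0 j) Hv; rewrite !mxE => <-.
  by apply: eq_bigr => i _; rewrite mxE mulrC.
have [i Hi] := @fin_max C n (fun j => `|v 0 j| / y j)
  (fun j => ltac:(by rewrite rpredM ?normr_real // rpredV gtr0_real)).
set w := `|v 0 i| / y i in Hi.
have hle j : `|v 0 j| <= w * y j by rewrite -ler_pdivrMr // Hi.
have vi0 : 0 < `|v 0 i|.
  rewrite lt_def normr_ge0 andbT normr_eq0; apply: contraNneq vn0 => vi.
  apply/eqP/matrixP => a j; rewrite ord1 !mxE; apply/eqP; rewrite -normr_eq0.
  rewrite eq_le normr_ge0 andbT; apply: (le_trans (hle j)).
  by rewrite /w vi normr0 mul0r mul0r.
have w0 : 0 <= w by rewrite divr_ge0 // ltW.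
have H1 : `|z| * `|v 0 i| <= w * mv A y i.
  rewrite -normrM -Ev; apply: (le_trans (ler_norm_sum _ _ _)).
  rewrite /mv mulr_sumr; apply: ler_sum => j _.
  rewrite normrM ger0_norm // mulrCA; apply: ler_wpM2l => //.
have H2 : w * mv A y i <= mu * `|v 0 i|.
  apply: (le_trans (ler_wpM2l w0 (hmu i))).
  by rewrite /w mulrCA divfK ?gt_eqF.
by rewrite -(ler_pM2r vi0); apply: le_trans H1 H2.
Qed.


Definition fstep (C : numFieldType) n (A : 'M[C]_n) (v : 'I_n -> C) :=
  fun i => v i + mv A v i.

Lemma mv_add (C : numFieldType) n (A : 'M[C]_n) u v i :
  mv A (fun j => u j + v j) i = mv A u i + mv A v i.
Proof. by rewrite /mv -big_split; apply: eq_bigr => j _; rewrite mulrDr. Qed.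

Lemma fstep_ge (C : numFieldType) n (A : 'M[C]_n) v :
  (forall i j, 0 <= A i j) -> (forall j, 0 <= v j) ->
  forall i, v i <= fstep A v i.
Proof. by move=> hA hv i; rewrite /fstep lerDl mv_ge0. Qed.

Lemma fstep_comm (C : numFieldType) n (A : 'M[C]_n) v b i :
  mv A (fstep A v) i - b * fstep A v i =
  fstep A (fun j => mv A v j - b * v j) i.
Proof.
rewrite /fstep mv_add mv_lin.
ring.
Qed.

Lemma iter_comm (C : numFieldType) n (A : 'M[C]_n) v b k i :
  mv A (iter k (fstep A) v) i - b * iter k (fstep A) v i =
  iter k (fstep A) (fun j => mv A v j - b * v j) i.
Proof.
elim: k i => [|k IH] i //=.
rewrite fstep_comm; rewrite /fstep; congr (_ + _); first exact: IH.
by apply: eq_bigr => j _; rewrite IH.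
Qed.

Lemma iter_ge (C : numFieldType) n (A : 'M[C]_n) v k :
  (forall i j, 0 <= A i j) -> (forall j, 0 <= v j) ->
  forall i, v i <= iter k (fstep A) v i.
Proof.
move=> hA hv; elim: k => [|k IH] i //=.
apply: (le_trans (IH i)); apply: fstep_ge => // j.
exact: le_trans (hv j) (IH j).
Qed.

Lemma supp_grow (C : numClosedFieldType) n (A : 'M[C]_n) (v : 'I_n -> C) :
  (forall i j, 0 <= A i j) -> (forall j, 0 <= v j) -> irreducible_mx A ->
  [set i | (0 < v i)%R] != set0 ->
  (minn (#|[set i | (0 < v i)%R]|.+1) n <= #|[set i | (0 < fstep A v i)%R]|)%N.
Proof.
move=> hA hv irr.
set S := [set i | (0 < v i)%R]; set S' := [set i | (0 < fstep A v i)%R] => Sn0.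
have sub : S \subset S'.
  apply/subsetP => i; rewrite !inE => vi.
  exact: lt_le_trans vi (fstep_ge hA hv i).
have [ST|STn] := eqVneq S setT.
  have : S' = setT by apply/eqP; rewrite eqEsubset subsetT -ST sub.
  by move=> ->; rewrite cardsT card_ord geq_minr.
have c1 : ~: S != set0 by rewrite -[set0 in _ != set0]setCK setC0 (inj_eq (@setC_inj _)).
have c2 : ~: S != setT by rewrite -setC0 (inj_eq (@setC_inj _)).
have [i [j [iI jI Aij]]] := irr (~: S) c1 c2.
move: iI jI; rewrite !inE negbK => iS jS.
have iS' : i \in S'.
  rewrite inE /fstep; apply: (lt_le_trans (y := mv A v i)); last by rewrite lerDr hv.
  rewrite /mv (bigD1 j) //=; apply: (lt_le_trans (y := A i j * v j)).
    by rewrite mulr_gt0 // lt_def Aij hA.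
  by rewrite lerDl sumr_ge0 // => k _; rewrite mulr_ge0.
have : i |: S \subset S' by rewrite subUset sub sub1set iS'.
move=> /subset_leq_card; rewrite cardsU1 inE iS add1n => H.
exact: leq_trans (geq_minl _ _) H.
Qed.

Lemma iter_pos (C : numClosedFieldType) n (A : 'M[C]_n.+1) (d : 'I_n.+1 -> C) :
  (forall i j, 0 <= A i j) -> irreducible_mx A -> (forall j, 0 <= d j) ->
  (exists i, 0 < d i) -> forall i, 0 < iter n (fstep A) d i.
Proof.
move=> hA irr hd [i0 di0].
have ge0 k j : 0 <= iter k (fstep A) d j.
  exact: le_trans (hd j) (iter_ge k hA hd j).
have H k : (k <= n)%N -> (k.+1 <= #|[set i | (0 < iter k (fstep A) d i)%R]|)%N.
  elim: k => [|k IH] kn.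
    by rewrite card_gt0; apply/set0Pn; exists i0; rewrite inE.
  have IH' := IH (ltnW kn).
  have Sn0 : [set i | (0 < iter k (fstep A) d i)%R] != set0.
    by rewrite -card_gt0 (leq_trans _ IH').
  have := supp_grow hA (ge0 k) irr Sn0; rewrite /=.
  apply: leq_trans; rewrite leq_min ltnS IH' /=.
  by rewrite ltnS.
move=> i.
have : [set i | (0 < iter n (fstep A) d i)%R] == setT.
  by rewrite eqEcard subsetT cardsT card_ord H.
by move/eqP/setP/(_ i); rewrite !inE.
Qed.

Lemma L_strict (C : numClosedFieldType) n (A : 'M[C]_n.+1) (y : 'I_n.+1 -> C) b :
  (forall i j, 0 <= A i j) -> irreducible_mx A -> (forall i, 0 < y i) ->
  b \is Num.real ->
  (forall i, b * y i <= mv A y i) -> (exists i, b * y i < mv A y i) ->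
  exists l, [/\ l \is Num.real, b < l & root (char_poly A) l].
Proof.
move=> hA irr hy rb hby [i0 hi0].
set d := fun j => mv A y j - b * y j.
have hd j : 0 <= d j by rewrite subr_ge0.
have y'pos j : 0 < iter n (fstep A) y j.
  apply: lt_le_trans (hy j) (iter_ge n hA _ j) => k; exact: ltW.
set y' := iter n (fstep A) y in y'pos.
have dpos j : 0 < mv A y' j - b * y' j.
  rewrite /y' iter_comm; apply: iter_pos => //.
  by exists i0; rewrite subr_gt0.
have rA i j : A i j \is Num.real by apply: ger0_real.
have [i Hi] := @fin_min C n (fun j => (mv A y' j - b * y' j) / y' j)
  (fun j => ltac:(by apply: gtr0_real; rewrite divr_gt0)).
set e := (mv A y' i - b * y' i) / y' i in Hi.
have e0 : 0 < e by rewrite divr_gt0.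
have hb' : forall j, (b + e) * y' j <= mv A y' j.
  move=> j; rewrite mulrDl addrC -lerBrDr -ler_pdivlMr //.
have [l [rl bl rootl]] := @L_root C n A y' (b + e) hA y'pos
  (rpredD rb (gtr0_real e0)) hb'.
exists l; split => //.
by apply: lt_le_trans bl; rewrite ltrDl.
Qed.


Lemma key_alg (C : numFieldType) (ci Mi Mn S T X Sg be : C) :
  be - S + T != 0 -> T * Sg = (be - Mn) * (be - S + T) ->
  ci * (Mi + X / (be - S + T)) - be * (ci * (1 + (Mi - Mn) / (be - S + T)))
  = ci / (be - S + T) * (X - (S * (Mi - Mn) + T * (Sg - (Mi - Mn)))).
Proof.
move=> g0 H.
have -> : T * (Sg - (Mi - Mn)) = (be - Mn) * (be - S + T) - T * (Mi - Mn).
  by rewrite -H mulrBr.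
by field.
Qed.

Lemma beta_ident (C : numClosedFieldType) (Mn S T Sg : C) :
  T * Sg = ((Mn + S - T + sqrtC ((Mn - S + T) ^+ 2 + 4 * T * Sg)) / 2 - Mn) *
           ((Mn + S - T + sqrtC ((Mn - S + T) ^+ 2 + 4 * T * Sg)) / 2 - S + T).
Proof.
have E := sqrtCK ((Mn - S + T) ^+ 2 + 4 * T * Sg).
set sD := sqrtC _ in E *.
have two0 : (2 : C) != 0 by rewrite pnatr_eq0.
have -> : (Mn + S - T + sD) / 2 - Mn = (S - T - Mn + sD) / 2 by field.
have -> : (Mn + S - T + sD) / 2 - S + T = (Mn - S + T + sD) / 2 by field.
have -> : (S - T - Mn + sD) / 2 * ((Mn - S + T + sD) / 2) =
   (sD ^+ 2 - (Mn - S + T) ^+ 2) / 4 by field.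
rewrite E.
have four0 : (4 : C) != 0 by rewrite pnatr_eq0.
by field.
Qed.


Theorem theorem2 (C : numClosedFieldType) (m : nat) (A : 'M[C]_(m.+2))
  (c : 'I_(m.+2) -> C) (S T : C) :
  nonneg_mx A -> irreducible_mx A ->
  (forall i, 0 < c i) ->
  (exists i, S = A i i) -> (forall i, S <= A i i) ->
  (exists i j, i != j /\ T = A i j * c j / c i) ->
  (forall i j, i != j -> T <= A i j * c j / c i) ->
  (forall i j : 'I_(m.+2), (i <= j)%N -> Mrow A c j <= Mrow A c i) ->
  let M := Mrow A c in
  let Mn := M ord_max in
  let bound := (Mn + S - T +
        sqrtC ((Mn - S + T) ^+ 2 + 4 * T * \sum_(k < m.+2 | (k < m.+1)%N) (M k - Mn)))
        / 2 in
  bound <= spectral_radius A /\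
  (spectral_radius A = bound <->
     ((forall i j, M i = M j) \/
      (0 < T /\
       exists t : 'I_(m.+2), [/\ (1 <= t)%N,
         (forall k : 'I_(m.+2), (k < t)%N -> A k k = S),
         (forall k l : 'I_(m.+2), (l < t)%N -> k != l -> A k l * c l / c k = T) &
         (forall k : 'I_(m.+2), (t <= k)%N -> M k = M t)]))).
Proof.
move=> hA irr hc [iS ES] hS [iT [jT [ijT ET]]] hT hM M Mn bound.
rewrite {}/bound.
set Sg := \sum_(k < m.+2 | (k < m.+1)%N) (M k - Mn).
set D := (Mn - S + T) ^+ 2 + 4 * T * Sg.
set sD := sqrtC D.
set bb := fun i j => A i j * c j / c i.
have rA i j : A i j \is Num.real by apply: ger0_real.
have rc i : c i \is Num.real by apply: gtr0_real.
have cn0 i : c i != 0 by rewrite gt_eqF.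
have bb0 i j : 0 <= bb i j by rewrite /bb divr_ge0 ?mulr_ge0 // ltW.
have Ab i j : A i j * c j = c i * bb i j by rewrite /bb [c i * _]mulrC divfK.
have Mdef i : M i = \sum_j bb i j.
  by rewrite /M /Mrow mulr_suml.
have rM i : M i \is Num.real.
  by rewrite Mdef; apply: rpred_sum => j _; apply: ger0_real.
have rS : S \is Num.real by rewrite ES.
have T0 : 0 <= T by rewrite ET bb0.
have rT : T \is Num.real by apply: ger0_real.
set dd := fun j => M j - Mn.
have dd0 j : 0 <= dd j by rewrite /dd subr_ge0; apply: hM; rewrite -ltnS.
have Sgall : \sum_j dd j = Sg.
  rewrite (bigD1 ord_max) //= {1}/dd subrr add0r /Sg.
  apply: eq_bigl => k; rewrite -(inj_eq val_inj) /=.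
  by rewrite ltn_neqAle -ltnS ltn_ord andbT.
have Sg0 : 0 <= Sg by rewrite -Sgall sumr_ge0.
have rSg : Sg \is Num.real by apply: ger0_real.
have D0 : (Mn - S + T) ^+ 2 <= D.
  by rewrite /D lerDl mulr_ge0 // mulr_ge0 // ler0n.
have rx : Mn - S + T \is Num.real by apply: rpredD => //; apply: rpredB => //; apply: rM.
have sqx0 : 0 <= (Mn - S + T) ^+ 2.
  by rewrite -(real_normK rx) exprn_ge0 // normr_ge0.
have sDge : `|Mn - S + T| <= sD.
  rewrite /sD -(sqrCK (normr_ge0 (Mn - S + T))) (real_normK rx).
  by rewrite ler_sqrtC // qualifE /= (le_trans sqx0 D0).
have rsD : sD \is Num.real by apply: sqrtC_real; apply: le_trans sqx0 D0.
have bbpos i j : A i j != 0 -> 0 < bb i j.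
  move=> Aij; rewrite /bb divr_gt0 // mulr_gt0 //.
  by rewrite lt_def Aij hA.
have bbd i : bb i i = A i i by rewrite /bb mulfK.
have x0 : 0 < Mn - S + T.
  have I0 : [set (ord_max : 'I_(m.+2))] != set0.
    by apply/set0Pn; exists ord_max; rewrite inE.
  have IT : [set (ord_max : 'I_(m.+2))] != setT.
    apply/eqP => E; have := congr1 (fun X : {set 'I_(m.+2)} => #|X|) E.
    by rewrite cards1 cardsT card_ord.
  have [i [j [iI jI Aij]]] := irr _ I0 IT.
  move: iI jI; rewrite !inE => /eqP iE jn; subst i.
  apply: ltr_wpDr => //; rewrite subr_gt0.
  rewrite /Mn Mdef (bigD1 ord_max) //= bbd.
  apply: ltr_pwDr; last exact: hS.
  apply: (lt_le_trans (bbpos _ _ Aij)).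
  by rewrite (bigD1 j) //= lerDl sumr_ge0.
set be := (Mn + S - T + sD) / 2.
set g := be - S + T.
have gE : g = (Mn - S + T + sD) / 2 by rewrite /g /be; field.
have sD0 : 0 <= sD by rewrite sqrtC_ge0 (le_trans sqx0 D0).
have g0 : 0 < g.
  by rewrite gE divr_gt0 // ltr_wpDr.
have rbe : be \is Num.real.
  rewrite /be; apply: rpredM; last by apply: ger0_real; rewrite invr_ge0 ler0n.
  by apply: rpredD => //; apply: rpredB => //; apply: rpredD => //; apply: rM.
have Tsig : T * Sg = (be - Mn) * g by apply: beta_ident.
have gn0 : g != 0 by rewrite gt_eqF.
set y := fun j => c j * (1 + dd j / g).
have ypos j : 0 < y j.
  rewrite /y mulr_gt0 //; apply: ltr_wpDr; last exact: ltr01.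
  by rewrite divr_ge0 // ltW.
set tt := fun i j : 'I_(m.+2) => if j == i then S else T.
have ee0 i j : 0 <= (bb i j - tt i j) * dd j.
  rewrite mulr_ge0 // subr_ge0 /tt; case: eqP => [->|/eqP ji].
    by rewrite bbd.
  by apply: hT; rewrite eq_sym.
have tsum i : \sum_j tt i j * dd j = S * dd i + T * (Sg - dd i).
  have E2 : \sum_(j | j != i) tt i j * dd j = T * \sum_(j | j != i) dd j.
    by rewrite mulr_sumr; apply: eq_bigr => j /negbTE ji; rewrite /tt ji.
  have E3 : Sg = dd i + \sum_(j | j != i) dd j by rewrite -Sgall (bigD1 i).
  by rewrite (bigD1 i) //= E2 E3 /tt eqxx [dd i + _]addrC addrK.
have Ei i : mv A y i - be * y i = c i / g * \sum_j (bb i j - tt i j) * dd j.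
  have -> : mv A y i = c i * (M i + (\sum_j bb i j * dd j) / g).
    have -> : c i * (M i + (\sum_j bb i j * dd j) / g) =
        \sum_j c i * (bb i j + bb i j * dd j / g).
      by rewrite Mdef mulr_suml -big_split mulr_sumr.
    rewrite /mv /y; apply: eq_bigr => j _.
    rewrite mulrA Ab; ring.
  have -> : \sum_j (bb i j - tt i j) * dd j =
      \sum_j bb i j * dd j - \sum_j tt i j * dd j.
    by rewrite -sumrB; apply: eq_bigr => j _; rewrite mulrBl.
  rewrite tsum.
  exact: key_alg.
have hge i : be * y i <= mv A y i.
  rewrite -subr_ge0 Ei mulr_ge0 ?sumr_ge0 //.
  by rewrite divr_ge0 // ltW.
have rA' : forall i j, 0 <= A i j := hA.
have P1 : be <= spectral_radius A.
  have [l [rl bl rootl]] := @L_root C m.+1 A y be hA ypos rbe hge.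
  apply: (le_trans bl); apply: (le_trans (real_ler_norm rl)).
  exact: rho_ge.
split => //.
have Mn0 : 0 <= Mn by rewrite /Mn Mdef sumr_ge0.
have be0 : 0 <= be.
  have : 0 <= (be - Mn) * g by rewrite -Tsig mulr_ge0.
  rewrite pmulr_lge0 // subr_ge0; exact: le_trans.
have eqcase : (forall i j, (bb i j - tt i j) * dd j = 0) -> spectral_radius A = be.
  move=> H; apply/eqP; rewrite eq_le P1 andbT; apply: rho_le => // z.
  apply: (eigen_bound (y := y)) => // i.
  have : mv A y i - be * y i = 0.
    by rewrite Ei big1 ?mulr0 // => j _; apply: H.
  by move/eqP; rewrite subr_eq0 => /eqP ->; rewrite mulrC.
split.
- move=> Hr.
  have Hz i : mv A y i - be * y i = 0.
    apply/eqP; apply: contraT => nz.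
    have [l [rl bl rootl]] : exists l, [/\ l \is Num.real, be < l & root (char_poly A) l].
      apply: (@L_strict C m.+1 A y be hA irr ypos rbe hge).
      by exists i; rewrite -subr_gt0 lt_def nz subr_ge0 hge.
    have := le_trans (real_ler_norm rl) (rho_ge rootl).
    by rewrite Hr => /(lt_le_trans bl); rewrite ltxx.
  have He i j : (bb i j - tt i j) * dd j = 0.
    have := Hz i; rewrite Ei => /eqP; rewrite mulf_eq0 mulf_eq0 invr_eq0 (negbTE gn0) (negbTE (cn0 i)) /=.
    by move=> /eqP; move/psumr_eq0P => ->.
  have [allE|notall] := boolP [forall j, M j == Mn].
    left => i j; move/forallP: allE => H.
    by rewrite (eqP (H i)) (eqP (H j)).
  right.
  have [j0 Mj0] : exists j0, M j0 != Mn.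
    by move: notall; rewrite negb_forall => /existsP.
  have dj0 : dd j0 != 0 by rewrite /dd subr_eq0.
  have bbT i : i != j0 -> bb i j0 = T.
    move=> ij; have ji : (j0 == i) = false by rewrite eq_sym (negbTE ij).
    have := He i j0; move/eqP; rewrite mulf_eq0 (negbTE dj0) orbF.
    by rewrite subr_eq0 /tt ji => /eqP.
  split.
    rewrite lt_def T0 andbT; apply/eqP => T00.
    have I0 : ~: [set j0] != set0 by rewrite -card_gt0 cardsC1 card_ord.
    have IT : ~: [set j0] != setT.
      by apply/eqP => E; have := in_setT j0; rewrite -E !inE eqxx.
    have [i [l [iI lI Ail]]] := irr _ I0 IT.
    move: iI lI; rewrite !inE negbK => ij0 /eqP lE; subst l.
    by have := bbpos _ _ Ail; rewrite bbT // T00 ltxx.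
  have Pmax : M ord_max == Mn by [].
  case: (@arg_minnP _ ord_max (fun k => M k == Mn) (fun k => val k) Pmax) => t Mt tmin.
  have Mtn : M t = Mn by apply/eqP.
  exists t; split.
  - rewrite lt0n; apply/negP => /eqP t0.
    move: Mj0; rewrite -Mtn; apply/negP; rewrite negbK eq_le; apply/andP; split.
      by apply: hM; rewrite t0.
    by rewrite Mtn -subr_ge0; apply: dd0.
  - move=> k kt; have Mk : M k != Mn.
      by apply/negP => /tmin; rewrite leqNgt kt.
    have := He k k; move/eqP; rewrite mulf_eq0 (_ : (dd k == 0) = false) ?orbF; last by rewrite /dd subr_eq0 (negbTE Mk).
    by rewrite subr_eq0 /tt eqxx bbd => /eqP.
  - move=> k l lt kl; have Ml : M l != Mn.
      by apply/negP => /tmin; rewrite leqNgt lt.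
    have := He k l; move/eqP; rewrite mulf_eq0 (_ : (dd l == 0) = false) ?orbF; last by rewrite /dd subr_eq0 (negbTE Ml).
    have lk : (l == k) = false by rewrite eq_sym (negbTE kl).
    by rewrite subr_eq0 /tt lk => /eqP.
  - move=> k tk; rewrite Mtn; apply/eqP; rewrite eq_le; apply/andP; split.
      by rewrite -Mtn; apply: hM.
    by rewrite -subr_ge0; apply: dd0.
- case => [allE | [Tpos [t [t1 Hd Ho Hm]]]]; apply: eqcase => i j.
    by rewrite /dd (allE j ord_max) subrr mulr0.
  have [jt|tj] := ltnP j t.
    have [ji|ji] := eqVneq j i.
      by subst j; rewrite /tt eqxx bbd Hd // subrr mul0r.
    by rewrite /tt (negbTE ji) /bb Ho // 1?eq_sym // subrr mul0r.
  have Mmax : Mn = M t by apply: Hm; rewrite -ltnS ltn_ord.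
  by rewrite /dd Hm // Mmax subrr mulr0.
Qed.
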